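(* Let $\mathcal{H}$ be a finite-dimensional Hilbert space with orthonormal basis $\{|g_i\rangle\}_{i=1}^{N_g}\cup\{|e_j\rangle\}_{j=1}^{N_e}$ (ground and excited states). Let $$H=\sum_{i=1}^{N_g}\sum_{j=1}^{N_e}\Big[\Delta_{ij}\big(|g_i\rangle\langle g_i|-|e_j\rangle\langle e_j|\big)+\big(V_{ij}|g_i\rangle\langle e_j|+V_{ij}^*|e_j\rangle\langle g_i|\big)\Big]$$ with $\Delta_{ij}\in\mathbb{R}$, $V_{ij}\in\mathbb{C}$. Let $\gamma_{ij}\ge 0$ be decay rates with $\Gamma_j:=\sum_{i=1}^{N_g}\gamma_{ij}>0$ for every $j$, let $\sigma_{ij}=|g_i\rangle\langle e_j|$, and define the Lindblad operator $$L(\rho)=-i[H,\rho]+\sum_{i,j}\gamma_{ij}\Big(-\tfrac12\{\sigma_{ij}^\dagger\sigma_{ij},\rho\}+\sigma_{ij}\rho\sigma_{ij}^\dagger\Big).$$ Let $\Gamma=\sum_{i,j}\gamma_{ij}\sigma_{ij}^\dagger\sigma_{ij}$, $\tilde H=H-i\Gamma$, and $L_{\tilde H}\rho=-i(\tilde H\rho-\rho\tilde H^\dagger)$. Then a density matrix $\rho_d$ on $\mathcal{H}$ is a dark state of $L$ if and only if $L_{\tilde H}\rho_d=0$.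
   Context: A density matrix is a positive semidefinite Hermitian operator of trace one. A dark state of $L$ is a density matrix $\rho$ with $L\rho=0$ that involves only the ground-state manifold, i.e. $P\rho P=\rho$ where $P=\sum_{i=1}^{N_g}|g_i\rangle\langle g_i|$ (equivalently, $\rho$ has no population or coherence involving the excited states $|e_j\rangle$). $\{A,B\}=AB+BA$ denotes the anticommutator. *)

(* Defs.v *)
From HB Require Import structures.
From mathcomp Require Import all_boot all_order all_algebra.
From mathcomp Require Import complex.
From mathcomp Require Import reals.
Set Implicit Arguments. Unset Strict Implicit. Unset Printing Implicit Defensive.
Import Order.TTheory GRing.Theory Num.Theory.
Local Open Scope ring_scope.
Local Open Scope complex_scope.

Section Lindblad.
Variables (R : realType) (Ng Ne : nat).
Local Notation C := R[i].
Local Notation n := (Ng + Ne)%N.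
Local Notation M := 'M[C]_n.

Definition gidx (i : 'I_Ng) : 'I_n := lshift Ne i.
Definition eidx (j : 'I_Ne) : 'I_n := rshift Ng j.

Definition dagger (m k : nat) (A : 'M[C]_(m, k)) : 'M[C]_(k, m) :=
  (map_mx Num.conj A)^T.

Definition density_matrix (rho : M) : Prop :=
  [/\ dagger rho = rho,
      (forall v : 'cV[C]_n, 0 <= (dagger v *m rho *m v) 0 0)
    & \tr rho = 1].

Definition hamiltonian (Delta : 'I_Ng -> 'I_Ne -> R) (V : 'I_Ng -> 'I_Ne -> C) : M :=
  \sum_(i < Ng) \sum_(j < Ne)
    ((Delta i j)%:C *: (delta_mx (gidx i) (gidx i) - delta_mx (eidx j) (eidx j))
     + (V i j *: delta_mx (gidx i) (eidx j)
        + (V i j)^* *: delta_mx (eidx j) (gidx i))).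

Definition sigma (i : 'I_Ng) (j : 'I_Ne) : M := delta_mx (gidx i) (eidx j).

Definition lindblad (H : M) (gamma : 'I_Ng -> 'I_Ne -> R) (rho : M) : M :=
  - 'i *: (H *m rho - rho *m H)
  + \sum_(i < Ng) \sum_(j < Ne)
      (gamma i j)%:C *:
        (- (2^-1) *: (dagger (sigma i j) *m sigma i j *m rho
                      + rho *m (dagger (sigma i j) *m sigma i j))
         + sigma i j *m rho *m dagger (sigma i j)).

Definition Gamma_op (gamma : 'I_Ng -> 'I_Ne -> R) : M :=
  \sum_(i < Ng) \sum_(j < Ne) (gamma i j)%:C *: (dagger (sigma i j) *m sigma i j).

Definition Htilde (H : M) (gamma : 'I_Ng -> 'I_Ne -> R) : M :=
  H - 'i *: Gamma_op gamma.

Definition L_Htilde (H : M) (gamma : 'I_Ng -> 'I_Ne -> R) (rho : M) : M :=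
  - 'i *: (Htilde H gamma *m rho - rho *m dagger (Htilde H gamma)).

Definition Pground : M := \sum_(i < Ng) delta_mx (gidx i) (gidx i).

Definition dark_state (L : M -> M) (rho : M) : Prop :=
  density_matrix rho /\ L rho = 0 /\ Pground *m rho *m Pground = rho.

End Lindblad.

(* Main.v *)
Require Import Defs.
From HB Require Import structures.
From mathcomp Require Import all_boot all_order all_algebra.
From mathcomp Require Import complex.
From mathcomp Require Import reals.
From mathcomp Require Import ring.
Import Order.TTheory GRing.Theory Num.Theory.
Local Open Scope ring_scope.

Section Helpers.
Local Open Scope complex_scope.
Variable R : realType.
Local Notation C := R[i].

Lemma ii_C : ('i : C) * 'i = -1.
Proof. by apply/eqP; rewrite eq_complex /= !(mul0r, mul1r, mulr0, sub0r, addr0, oppr0, eqxx). Qed.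

Lemma conj_iC : Num.conj ('i : C) = - 'i.
Proof. by apply/eqP; rewrite eq_complex /= oppr0 !eqxx. Qed.

Lemma conj_realC (x : R) : Num.conj (x%:C) = x%:C.
Proof. exact: conjc_real. Qed.

Lemma conjK_C (x : C) : Num.conj (Num.conj x) = x.
Proof. exact: conjCK. Qed.

Lemma daggerD m k (A B : 'M[C]_(m, k)) : dagger (A + B) = dagger A + dagger B.
Proof. by rewrite /dagger map_mxD linearD. Qed.

Lemma dagger0 m k : dagger (0 : 'M[C]_(m, k)) = 0.
Proof. by rewrite /dagger map_mx0 trmx0. Qed.

Lemma daggerN m k (A : 'M[C]_(m, k)) : dagger (- A) = - dagger A.
Proof. by rewrite /dagger map_mxN linearN. Qed.

Lemma daggerZ m k (a : C) (A : 'M[C]_(m, k)) : dagger (a *: A) = Num.conj a *: dagger A.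
Proof. by rewrite /dagger map_mxZ linearZ. Qed.

Lemma daggerM m k p (A : 'M[C]_(m, k)) (B : 'M[C]_(k, p)) :
  dagger (A *m B) = dagger B *m dagger A.
Proof. by rewrite /dagger map_mxM trmx_mul. Qed.

Lemma dagger_delta m k (i : 'I_m) (j : 'I_k) :
  dagger (delta_mx i j : 'M[C]_(m, k)) = delta_mx j i.
Proof. by rewrite /dagger map_delta_mx trmx_delta. Qed.

Lemma dagger_sum m k (I : finType) (F : I -> 'M[C]_(m, k)) :
  dagger (\sum_i F i) = \sum_i dagger (F i).
Proof. exact: (big_morph _ (@daggerD m k) (@dagger0 m k)). Qed.


Variables (Ng Ne : nat).
Local Notation n := (Ng + Ne)%N.
Local Notation M := 'M[C]_n.

Lemma ham_herm (Delta : 'I_Ng -> 'I_Ne -> R) (V : 'I_Ng -> 'I_Ne -> C) :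
  dagger (hamiltonian Delta V) = hamiltonian Delta V.
Proof.
rewrite /hamiltonian dagger_sum; apply: eq_bigr => i _.
rewrite dagger_sum; apply: eq_bigr => j _.
rewrite !daggerD !daggerZ daggerD daggerN !dagger_delta conj_realC conjK_C.
by rewrite [X in _ + X]addrC.
Qed.

Lemma sigma2 i j : dagger (sigma R i j) *m sigma R i j = delta_mx (eidx Ng j) (eidx Ng j) :> M.
Proof. by rewrite /sigma dagger_delta mul_delta_mx. Qed.

Lemma Gamma_herm (gamma : 'I_Ng -> 'I_Ne -> R) :
  dagger (Gamma_op gamma) = Gamma_op gamma.
Proof.
rewrite /Gamma_op dagger_sum; apply: eq_bigr => i _.
rewrite dagger_sum; apply: eq_bigr => j _.
by rewrite daggerZ conj_realC sigma2 dagger_delta.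
Qed.

Lemma LH_formula (H : M) gamma rho : dagger H = H ->
  L_Htilde H gamma rho =
  - 'i *: (H *m rho - rho *m H) - (Gamma_op gamma *m rho + rho *m Gamma_op gamma).
Proof.
move=> hH; rewrite /L_Htilde /Htilde daggerD daggerN daggerZ hH Gamma_herm conj_iC.
rewrite mulmxBl mulmxDr -!scalemxAl mulmxN -!scalemxAr.
set A := H *m rho; set B := Gamma_op gamma *m rho; set C0 := rho *m H; set D := rho *m Gamma_op gamma.
rewrite !(scalerDr, scalerN, scalerA, mulrN, mulNr, opprK, ii_C, scaleN1r, scaleNr).
by rewrite !opprD opprK; rewrite !addrA; congr (_ + _); rewrite -!addrA; congr (_ + _); rewrite addrC.
Qed.


Local Notation P := (Pground R Ng Ne).

Lemma P_e p (x : 'I_p) j : P *m delta_mx (eidx Ng j) x = 0.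
Proof.
rewrite /Pground mulmx_suml big1 // => i _.
by rewrite mul_delta_mx_0 // /gidx /eidx eq_lrshift.
Qed.

Lemma e_P p (x : 'I_p) j : delta_mx x (eidx Ng j) *m P = 0.
Proof.
rewrite /Pground mulmx_sumr big1 // => i _.
by rewrite mul_delta_mx_0 // /gidx /eidx eq_rlshift.
Qed.

Lemma L_eq (H : M) gamma rho : P *m rho *m P = rho -> dagger H = H ->
  lindblad H gamma rho = L_Htilde H gamma rho.
Proof.
move=> hP hH.
have hl : forall (x : 'I_n) j, delta_mx x (eidx Ng j) *m rho = 0.
  by move=> x j; rewrite -hP !mulmxA e_P !mul0mx.
have hr : forall (x : 'I_n) j, rho *m delta_mx (eidx Ng j) x = 0.
  by move=> x j; rewrite -hP -!mulmxA P_e !mulmx0.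
rewrite LH_formula //.
have -> : Gamma_op gamma *m rho = 0.
  rewrite /Gamma_op mulmx_suml big1 // => i _.
  rewrite mulmx_suml big1 // => j _.
  by rewrite -scalemxAl sigma2 hl scaler0.
have -> : rho *m Gamma_op gamma = 0.
  rewrite /Gamma_op mulmx_sumr big1 // => i _.
  rewrite mulmx_sumr big1 // => j _.
  by rewrite -scalemxAr sigma2 hr scaler0.
rewrite /lindblad big1 ?addr0 ?subr0 // => i _.
rewrite big1 // => j _.
by rewrite sigma2 hl hr {1}/sigma hl mul0mx !addr0 scaler0 scaler0.
Qed.


Lemma quadM (A : M) k l :
  delta_mx 0 k *m A *m delta_mx l 0 = (A k l)%:M :> 'M[C]_1.
Proof.
apply/matrixP => a b; rewrite !ord1 -rowE -colE !mxE eqxx /=.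
by rewrite mulr1n.
Qed.

Lemma psd_diag rho k : @density_matrix R Ng Ne rho -> 0 <= rho k k.
Proof.
move=> [_ hpos _]; have := hpos (delta_mx k 0).
by rewrite dagger_delta quadM mxE eqxx mulr1n.
Qed.

Lemma psd_off rho k l : @density_matrix R Ng Ne rho -> rho k k = 0 -> rho k l = 0.
Proof.
move=> hd hk; case: (eqVneq (rho k l) 0) => // hx; exfalso.
case: hd => hH hpos htr.
have hdl : 0 <= rho l l by apply: psd_diag.
have hy : rho l k = Num.conj (rho k l).
  by have := congr1 (fun A : M => A l k) hH; rewrite /dagger !mxE => ->.
set x := rho k l in hx hy; set d := rho l l in hdl.
have hcx : Num.conj x != 0 by rewrite conjC_eq0.
pose a := - (1 + d) / Num.conj x.
have := hpos (a *: delta_mx k 0 + delta_mx l 0).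
rewrite daggerD daggerZ !dagger_delta !mulmxDl !mulmxDr -!scalemxAl -!scalemxAr.
rewrite !quadM hk hy -/x -/d !mxE !eqxx /= !mulr1n.
have ha : a * Num.conj x = - (1 + d) by rewrite /a divfK.
have hca : Num.conj a * x = - (1 + d).
  have hm : forall u v : C, Num.conj (u * v) = Num.conj u * Num.conj v by move=> u v; exact: rmorphM.
  have := congr1 Num.conj ha; rewrite hm conjK_C => ->.
  by apply/eqP; rewrite -CrealE rpredN rpredD ?real1 ?ger0_real.
rewrite hca ha.
have -> : Num.conj a * (a * 0) + - (1 + d) + (- (1 + d) + d) = - (1 + (1 + d)) by ring.
rewrite oppr_ge0 => h.
have h1 : 0 < 1 + (1 + d).
  by rewrite (lt_le_trans ltr01) // lerDl addr_ge0 // ler01.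
by move: (lt_le_trans h1 h); rewrite ltxx.
Qed.


Lemma tr_delta (A : M) k : \tr (delta_mx k k *m A) = A k k.
Proof.
rewrite -(mul_delta_mx (0 : 'I_1) k k) -mulmxA mxtrace_mulC -rowE -colE.
by rewrite trace_mx11 !mxE.
Qed.

Lemma tr_L (H : M) gamma rho : dagger H = H ->
  \tr (L_Htilde H gamma rho) = - (\tr (Gamma_op gamma *m rho) + \tr (Gamma_op gamma *m rho)).
Proof.
move=> hH; rewrite LH_formula // raddfB /= linearZ /= raddfB /= (mxtrace_mulC rho H).
by rewrite subrr mulr0 sub0r raddfD /= (mxtrace_mulC rho).
Qed.

Lemma tr_Gamma gamma (rho : M) : \tr (Gamma_op gamma *m rho) =
  \sum_(i < Ng) \sum_(j < Ne) (gamma i j)%:C * rho (eidx Ng j) (eidx Ng j).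
Proof.
have tS : forall (I : finType) (F : I -> M), \tr (\sum_i F i) = \sum_i \tr (F i).
  by move=> I F; exact: raddf_sum.
rewrite /Gamma_op mulmx_suml tS; apply: eq_bigr => i _.
rewrite mulmx_suml tS; apply: eq_bigr => j _.
by rewrite -scalemxAl mxtraceZ sigma2 tr_delta.
Qed.

Lemma one_sum : (1%:M : M) = \sum_(k < n) delta_mx k k.
Proof.
apply/matrixP => a b; rewrite mxE summxE (bigD1 a) //= big1 => [|k /negbTE hk]; last first.
  by rewrite mxE eq_sym hk andFb.
by rewrite mxE eqxx addr0 eq_sym.
Qed.


Lemma ground_of_LH (H : M) gamma rho :
  (forall i j, 0 <= gamma i j) -> (forall j, 0 < \sum_(i < Ng) gamma i j) ->
  @density_matrix R Ng Ne rho -> dagger H = H -> L_Htilde H gamma rho = 0 ->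
  P *m rho *m P = rho.
Proof.
move=> hg hG hd hH hL.
have ht := congr1 mxtrace hL; rewrite tr_L // mxtrace0 in ht.
have t0 : \tr (Gamma_op gamma *m rho) = 0.
  by apply/eqP; move/eqP: ht; rewrite oppr_eq0 -mulr2n mulrn_eq0.
rewrite tr_Gamma in t0.
have f0 : forall i j, (gamma i j)%:C * rho (eidx Ng j) (eidx Ng j) = 0.
  have hg' : forall i j, 0 <= (gamma i j)%:C by move=> i j; rewrite ler0c.
  move=> i j.
  have h := psumr_eq0P (fun i _ => sumr_ge0 _ (fun j _ => mulr_ge0 (hg' i j) (psd_diag _ _ hd))) t0 (i:=i) isT.
  rewrite /= in h.
  exact: (psumr_eq0P (fun j _ => mulr_ge0 (hg' i j) (psd_diag _ _ hd)) h (i:=j) isT).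
have dz : forall j, rho (eidx Ng j) (eidx Ng j) = 0.
  move=> j; case: (eqVneq (rho (eidx Ng j) (eidx Ng j)) 0) => // hne; exfalso.
  have : \sum_(i < Ng) gamma i j = 0.
    apply: big1 => i _; move: (f0 i j) => /eqP; rewrite mulf_eq0 (negbTE hne) orbF.
    by rewrite eq_complex /= => /andP [/eqP].
  by move=> h0; move: (hG j); rewrite h0 ltxx.
have hrow : forall j, row (eidx Ng j) rho = 0.
  by move=> j; apply/rowP => l; rewrite !mxE psd_off.
have hcol : forall j, col (eidx Ng j) rho = 0.
  move=> j; apply/colP => l; rewrite !mxE.
  case: (hd) => hH' _ _.
  have := congr1 (fun A : M => A l (eidx Ng j)) hH'; rewrite /dagger !mxE => <-.
  by rewrite psd_off //; exact: conjc0.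
pose Q := \sum_(j < Ne) delta_mx (eidx Ng j) (eidx Ng j) : M.
have hPQ : 1%:M = P + Q by rewrite one_sum big_split_ord.
have hQl : Q *m rho = 0.
  rewrite /Q mulmx_suml big1 // => j _.
  by rewrite -(mul_delta_mx (0 : 'I_1)) -mulmxA -rowE hrow mulmx0.
have hQr : rho *m Q = 0.
  rewrite /Q mulmx_sumr big1 // => j _.
  by rewrite -(mul_delta_mx (0 : 'I_1)) mulmxA -colE hcol mul0mx.
have -> : P = 1%:M - Q by rewrite hPQ addrK.
by rewrite mulmxBl mul1mx hQl subr0 mulmxBr mulmx1 hQr subr0.
Qed.

End Helpers.

Theorem theorem1 (R : realType) (Ng Ne : nat)
  (Delta : 'I_Ng -> 'I_Ne -> R) (V : 'I_Ng -> 'I_Ne -> R[i])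
  (gamma : 'I_Ng -> 'I_Ne -> R)
  (gamma_ge0 : forall i j, 0 <= gamma i j)
  (Gamma_pos : forall j, 0 < \sum_(i < Ng) gamma i j)
  (rho : 'M[R[i]]_(Ng + Ne)) :
  density_matrix rho ->
  (dark_state (lindblad (hamiltonian Delta V) gamma) rho <->
   L_Htilde (hamiltonian Delta V) gamma rho = 0).
Proof.
move=> hd; split.
  by move=> [_ [hL hP]]; rewrite -L_eq // ham_herm.
move=> hL.
have hP : Pground R Ng Ne *m rho *m Pground R Ng Ne = rho.
  exact: (ground_of_LH R Ng Ne _ gamma rho gamma_ge0 Gamma_pos hd (ham_herm R Ng Ne Delta V) hL).
by split; [|split] => //; rewrite L_eq // ham_herm.
Qed.
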